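(* Let $n>k\geq 3$ be odd integers and let $A$ be a cyclically $k$-diagonal $n\times n$ array. Let $E=\{e_1<e_2<\dots<e_t\}\subseteq[1,n]$, let $C=(1,\dots,1)\in\{-1,1\}^n$ and let $R=(r_1,\dots,r_n)\in\{-1,1\}^n$ with $r_i=-1$ if $i\in E$ and $r_i=1$ if $i\notin E$. Let $D_1=\{(d,d):d\in[1,n]\}$ be the main diagonal and let $F:D_1\to D_1$ send $(d,d)$ to the first cell of $D_1$ occurring in the sequence $CN_{RC}(d,d),CN_{RC}^2(d,d),\dots$. Define $\Theta(d)$ to be the element of $[1,n]$ congruent to $d-(k-1)$ modulo $n$, and (when $E\neq\emptyset$) $\Omega:E\to E$, $\Omega(e_s)=e_{s+(k-1)}$, subscripts read modulo $t$. Define $S_D:[1,n]\to[1,n]$ by $S_D(d)=\Theta(\Omega(d))$ if $d\in E$ and $S_D(d)=\Theta(d)$ otherwise. Then for every $d\in[1,n]$, $F(d,d)=(S_D(d),S_D(d))$.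
   Context: An $m\times n$ array is partially filled; $F(A)$ is its set of filled cells, every row and column contains at least one filled cell, and the array is toroidal (row indices mod $m$, column indices mod $n$). The row successor of $(i,j)\in F(A)$ is $s_R(i,j)=(i,j+t)$ with $t\ge1$ minimal such that this cell is filled; the column successor is $s_C(i,j)=(i+t,j)$ with $t\geq 1$ minimal such that it is filled; both are permutations of $F(A)$. For $R=(r_1,\dots,r_m)\in\{-1,1\}^m$, $C=(c_1,\dots,c_n)\in\{-1,1\}^n$, the Crazy Knight's move is $CN_{RC}(i,j)=s_C^{c_{j'}}(i,j')$ where $(i,j')=s_R^{r_i}(i,j)$. An $n\times n$ array is cyclically $k$-diagonal if its filled cells are exactly those $(i,j)$ with $i-j \bmod n\in\{0,1,\dots,k-1\}$ (the diagonals $D_1,\dots,D_k$, where $D_s=\{(s,1),(s+1,2),\dots,(s-1,n)\}$). *)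

(* Defs.v *)
From mathcomp Require Import all_boot all_order all_algebra.
Set Implicit Arguments. Unset Strict Implicit. Unset Printing Implicit Defensive.

(* Indices are 0-based: row/column index i : 'I_n stands for the paper's i+1. *)

Lemma ord_pos (n : nat) (j : 'I_n) : 0 < n.
Proof. exact: leq_ltn_trans (leq0n j) (ltn_ord j). Qed.

Definition addmod (n : nat) (j : 'I_n) (t : nat) : 'I_n :=
  Ordinal (ltn_pmod (j + t) (ord_pos j)).

Definition cell (m n : nat) := ('I_m * 'I_n)%type.

(* row successor: (i, j + t) with t >= 1 minimal such that the cell is filled *)
Definition sR (m n : nat) (A : {set cell m n}) (x : cell m n) : cell m n :=
  let t := find (fun t => (x.1, addmod x.2 t) \in A) (iota 1 n) in
  (x.1, addmod x.2 t.+1).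

(* column successor: (i + t, j) with t >= 1 minimal such that the cell is filled *)
Definition sC (m n : nat) (A : {set cell m n}) (x : cell m n) : cell m n :=
  let t := find (fun t => (addmod x.1 t, x.2) \in A) (iota 1 m) in
  (addmod x.1 t.+1, x.2).

(* f^e for e in {-1, 1}; f^-1 is the (fingraph) inverse finv f, which is the
   inverse permutation on F(A) *)
Definition spow (T : finType) (f : T -> T) (e : int) : T -> T :=
  if (e < 0)%R then finv f else f.

Definition CN (m n : nat) (A : {set cell m n}) (R : 'I_m -> int) (C : 'I_n -> int)
  (x : cell m n) : cell m n :=
  let y := spow (sR A) (R x.1) x in spow (sC A) (C y.2) y.

(* cyclically k-diagonal n x n array: filled iff (i - j) mod n in {0,..,k-1} *)
Definition kdiag (n k : nat) : {set cell n n} :=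
  [set x : cell n n | (x.1 + (n - x.2)) %% n < k].

Definition D1 (n : nat) : {set cell n n} := [set x : cell n n | x.1 == x.2 :> nat].

Definition first_hit (T : Type) (f : T -> T) (P : T -> Prop) (x y : T) : Prop :=
  exists t : nat, [/\ 0 < t, iter t f x = y, P y &
                      forall s, 0 < s < t -> ~ P (iter s f x)].

Definition Theta (n k : nat) (d : 'I_n) : 'I_n := addmod d (n - (k - 1) %% n).

Definition Eseq (n : nat) (E : {set 'I_n}) : seq 'I_n :=
  sort (fun a b : 'I_n => (a <= b)%N) (enum E).

Definition Omega (n k : nat) (E : {set 'I_n}) (d : 'I_n) : 'I_n :=
  let s := Eseq E in nth d s ((index d s + (k - 1)) %% size s).

Definition S_D (n k : nat) (E : {set 'I_n}) (d : 'I_n) : 'I_n :=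
  if d \in E then Theta k (Omega k E d) else Theta k d.

Definition RofE (n : nat) (E : {set 'I_n}) : 'I_n -> int :=
  fun i => if i \in E then (-1)%R else 1%R.

(* Main.v *)
Require Import Defs.
From mathcomp Require Import all_boot all_order all_algebra.
From mathcomp Require Import zify.
Set Implicit Arguments. Unset Strict Implicit.

Lemma diag_val n a b D : a < n -> b < n -> D < n -> (b + D) %% n = a ->
  (a + (n - b)) %% n = D.
Proof.
move=> an bn Dn H; rewrite -H modnDml.
have->: b + D + (n - b) = D + n by lia.
by rewrite modnDr modn_small.
Qed.

Definition dg n (x : cell n n) : nat := (x.1 + (n - x.2)) %% n.

Definition isPos n (x : cell n n) (i d : nat) : Prop :=
  (x.1 : nat) = i %% n /\ (x.2 + d) %% n = i %% n.

Lemma isPos_dg n (x : cell n n) i d : isPos x i d -> d < n -> dg x = d.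
Proof.
case=> h1 h2 dn; apply: diag_val => //; by rewrite ?h2 ?h1.
Qed.

Lemma isPos_self n (x : cell n n) : isPos x x.1 (dg x).
Proof.
split; first by rewrite modn_small.
rewrite /dg modnDmr.
have->: x.2 + (x.1 + (n - x.2)) = x.1 + n by have := ltn_ord x.2; lia.
by rewrite modnDr.
Qed.

Lemma isPos_uniq n (x y : cell n n) i d : isPos x i d -> isPos y i d -> x = y.
Proof.
case: x y => [x1 x2] [y1 y2] /= [h1 h2] [h3 h4].
have e1: x1 = y1 by apply: val_inj; rewrite /= h1 h3.
have e2 : x2 = y2.
  apply: val_inj => /=.
  have: (x2 + d) %% n = (y2 + d) %% n by rewrite h2 h4.
  move/eqP; rewrite eqn_modDr => /eqP.
  by rewrite !modn_small.
by rewrite e1 e2.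
Qed.

Lemma exists_pos n i d : 0 < n -> d <= n -> exists y : cell n n, isPos y i d.
Proof.
move=> H dn.
exists (Ordinal (ltn_pmod i H), Ordinal (ltn_pmod (i + (n-d)) H)); split => //=.
by rewrite modnDml -addnA subnK // modnDr.
Qed.

Lemma kd_mem n k (a b : 'I_n) D : D < n -> (b + D) %% n = a ->
  ((a, b) \in kdiag n k) = (D < k).
Proof.
move=> Dn H; rewrite inE /= (diag_val _ _ _ H) //.
Qed.

Lemma find_iota_eq (p : pred nat) a m t : t < m -> p (a + t) ->
  (forall s, s < t -> ~~ p (a + s)) -> find p (iota a m) = t.
Proof.
elim: t a m => [|t IH] a [|m] //= Ht Hp Hb.
  by rewrite addn0 in Hp; rewrite Hp.
have := Hb 0 isT; rewrite addn0 => /negbTE ->.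
congr S; apply: IH => //.
  by rewrite addSnnS.
by move=> s st; rewrite addSnnS; apply: Hb.
Qed.

Lemma sR_pos1 n k (x : cell n n) i d : k < n -> isPos x i d -> 0 < d < k ->
  isPos (sR (kdiag n k) x) i d.-1.
Proof.
move=> kn [h1 h2] /andP[d0 dk].
rewrite /sR; set t := find _ _.
have -> : t = 0.
  apply: find_iota_eq; first lia.
  rewrite addn0 (@kd_mem _ _ _ _ d.-1); try lia.
  rewrite /= modnDml; have->: x.2 + 1 + d.-1 = x.2 + d by lia.
  by rewrite h2 h1.
  by move=> s; rewrite ltn0.
split => //=.
rewrite modnDml; have->: x.2 + 1 + d.-1 = x.2 + d by lia.
by [].
Qed.

Lemma sR_pos0 n k (x : cell n n) i : 0 < k -> k < n -> isPos x i 0 ->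
  isPos (sR (kdiag n k) x) i (k - 1).
Proof.
move=> k0 kn [h1 h2].
rewrite /sR; set t := find _ _.
have -> : t = n - k.
  apply: find_iota_eq; first lia.
    rewrite (@kd_mem _ _ _ _ (k - 1)); try lia.
    rewrite /= modnDml; have->: x.2 + (1 + (n - k)) + (k - 1) = x.2 + 0 + n by lia.
    by rewrite modnDr h2 h1.
  move=> s sk.
  rewrite (@kd_mem _ _ _ _ (n - s.+1)); try lia.
  rewrite /= modnDml; have->: x.2 + (1 + s) + (n - s.+1) = x.2 + 0 + n by lia.
  by rewrite modnDr h2 h1.
split => //=.
rewrite modnDml; have->: x.2 + (n - k).+1 + (k - 1) = x.2 + 0 + n by lia.
by rewrite modnDr.
Qed.

Lemma sC_pos1 n k (x : cell n n) i d : k < n -> isPos x i d -> d.+1 < k ->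
  isPos (sC (kdiag n k) x) i.+1 d.+1.
Proof.
move=> kn [h1 h2] dk.
rewrite /sC; set t := find _ _.
have -> : t = 0.
  apply: find_iota_eq; first lia.
  rewrite addn0 (@kd_mem _ _ _ _ d.+1); try lia.
  by rewrite /= addnS -addn1 -modnDml h2 -h1.
  by move=> s; rewrite ltn0.
split => /=.
  by rewrite h1 modnDml addn1.
by rewrite addnS -addn1 -modnDml h2 modnDml addn1.
Qed.

Lemma sC_pos0 n k (x : cell n n) i : 0 < k -> k < n -> isPos x i (k - 1) ->
  isPos (sC (kdiag n k) x) (i + (n - (k - 1))) 0.
Proof.
move=> k0 kn [h1 h2].
rewrite /sC; set t := find _ _.
have -> : t = n - k.
  apply: find_iota_eq; first lia.
    rewrite (@kd_mem _ _ _ _ 0); try lia.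
    rewrite /= h1 -h2 modnDml.
    have->: x.2 + (k - 1) + (1 + (n - k)) = x.2 + 0 + n by lia.
    by rewrite modnDr.
  move=> s sk.
  rewrite (@kd_mem _ _ _ _ (k + s)); try lia.
  rewrite /= h1 -h2 modnDml; congr (_ %% n); lia.
split => /=.
  by rewrite h1 modnDml; congr (_ %% n); lia.
rewrite -[in RHS]modnDml -h2 modnDml.
have->: x.2 + (k - 1) + (n - (k - 1)) = x.2 + 0 + n by lia.
by rewrite modnDr.
Qed.

Lemma isPos_in n k (x : cell n n) i d : isPos x i d -> d < k -> k < n ->
  x \in kdiag n k.
Proof.
move=> H dk kn; rewrite inE -/(dg x) (isPos_dg H) //; lia.
Qed.

Lemma dg_lt n k (x : cell n n) : x \in kdiag n k -> dg x < k.
Proof. by rewrite inE. Qed.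

Lemma sR_posf n k (x : cell n n) i d : 0 < k -> k < n -> isPos x i d -> d < k ->
  isPos (sR (kdiag n k) x) i (if d == 0 then k - 1 else d.-1).
Proof.
move=> k0 kn H dk; case: eqP => [d0|/eqP d0].
  by subst d; apply: sR_pos0.
apply: sR_pos1 => //; lia.
Qed.

Lemma sR_in n k : 0 < k -> k < n ->
  {homo sR (kdiag n k) : x / x \in kdiag n k}.
Proof.
move=> k0 kn x xA; have dk := dg_lt xA.
apply: (isPos_in (sR_posf k0 kn (isPos_self x) dk)) => //.
case: eqP => _; lia.
Qed.

Lemma sR_inj n k : 0 < k -> k < n ->
  {in kdiag n k &, injective (sR (kdiag n k))}.
Proof.
move=> k0 kn x y xA yA e.
have dx := dg_lt xA; have dy := dg_lt yA.
have Px := sR_posf k0 kn (isPos_self x) dx.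
have Py := sR_posf k0 kn (isPos_self y) dy.
have e1 : x.1 = y.1 by have := congr1 fst e.
have edx := isPos_dg Px; have edy := isPos_dg Py.
have ed : dg x = dg y.
  rewrite e in edx.
  have h1 : (if dg x == 0 then k - 1 else (dg x).-1) < n by case: eqP => _; lia.
  have h2 : (if dg y == 0 then k - 1 else (dg y).-1) < n by case: eqP => _; lia.
  have := edy h2; rewrite (edx h1).
  by case: eqP => ?; case: eqP => ?; lia.
apply: (isPos_uniq (isPos_self x)).
by rewrite ed e1; apply: isPos_self.
Qed.

Lemma sRinv1 n k (x : cell n n) i d : 0 < k -> k < n -> isPos x i d -> d.+1 < k ->
  isPos (finv (sR (kdiag n k)) x) i d.+1.
Proof.
move=> k0 kn H dk.
have [y Py] := @exists_pos n i d.+1 (ltn_trans k0 kn) (ltnW (ltn_trans dk kn)).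
have Sy := @sR_pos1 n k y i d.+1 kn Py dk.
rewrite -(isPos_uniq Sy H) (finv_f_in (sR_in k0 kn) (sR_inj k0 kn)) //.
exact: (isPos_in Py).
Qed.

Lemma sRinv0 n k (x : cell n n) i : 0 < k -> k < n -> isPos x i (k - 1) ->
  isPos (finv (sR (kdiag n k)) x) i 0.
Proof.
move=> k0 kn H.
have [y Py] := @exists_pos n i 0 (ltn_trans k0 kn) (leq0n _).
have Sy := @sR_pos0 n k y i k0 kn Py.
rewrite -(isPos_uniq Sy H) (finv_f_in (sR_in k0 kn) (sR_inj k0 kn)) //.
exact: (isPos_in Py).
Qed.

Lemma spow1 (T : finType) (f : T -> T) : spow f 1 = f.
Proof. by []. Qed.

Lemma spowN1 (T : finType) (f : T -> T) : spow f (-1) = finv f.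
Proof. by []. Qed.

Definition Emod n (E : {set 'I_n}) (m : nat) : bool :=
  [exists e : 'I_n, (e \in E) && (val e == m %% n)].

Lemma RofE_pos n (E : {set 'I_n}) (x : cell n n) i d : isPos x i d ->
  RofE E x.1 = if Emod E i then (-1)%R else 1%R.
Proof.
case=> h1 _; rewrite /RofE; congr (if _ then _ else _).
apply/idP/existsP => [xE|[e /andP[eE /eqP ev]]].
  by exists x.1; rewrite xE; apply/eqP; exact: h1.
by have -> : x.1 = e by apply: val_inj; rewrite /= h1 ev.
Qed.

Definition CNf n k (E : {set 'I_n}) :=
  CN (kdiag n k) (RofE E) (fun _ : 'I_n => 1%R).

Lemma CN_notE n k E (x : cell n n) i d : 0 < k -> k < n -> ~~ Emod E i ->
  isPos x i d -> 0 < d < k -> isPos (CNf k E x) i.+1 d.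
Proof.
move=> k0 kn nE H dk; rewrite /CNf /CN (RofE_pos E H) (negbTE nE) spow1 spow1.
have := sR_pos1 kn H dk => H'.
have -> : d = (d.-1).+1 by lia.
apply: sC_pos1 => //; lia.
Qed.

Lemma CN_notE0 n k E (x : cell n n) i : 0 < k -> k < n -> ~~ Emod E i ->
  isPos x i 0 -> isPos (CNf k E x) (i + (n - (k - 1))) 0.
Proof.
move=> k0 kn nE H; rewrite /CNf /CN (RofE_pos E H) (negbTE nE) spow1 spow1.
exact: sC_pos0 (sR_pos0 k0 kn H).
Qed.

Lemma CN_E n k E (x : cell n n) i d : 0 < k -> k < n -> Emod E i ->
  isPos x i d -> d.+2 < k -> isPos (CNf k E x) i.+1 d.+2.
Proof.
move=> k0 kn iE H dk; rewrite /CNf /CN (RofE_pos E H) iE spowN1 spow1.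
apply: sC_pos1 => //; apply: sRinv1 => //; lia.
Qed.

Lemma CN_E2 n k E (x : cell n n) i : 1 < k -> k < n -> Emod E i ->
  isPos x i (k - 2) -> isPos (CNf k E x) (i + (n - (k - 1))) 0.
Proof.
move=> k1 kn iE H; rewrite /CNf /CN (RofE_pos E H) iE spowN1 spow1.
apply: sC_pos0; try lia.
have -> : k - 1 = (k - 2).+1 by lia.
apply: sRinv1 => //; lia.
Qed.

Lemma CN_E3 n k E (x : cell n n) i : 1 < k -> k < n -> Emod E i ->
  isPos x i (k - 1) -> isPos (CNf k E x) i.+1 1.
Proof.
move=> k1 kn iE H; rewrite /CNf /CN (RofE_pos E H) iE spowN1 spow1.
apply: sC_pos1 => //; apply: sRinv0 => //; lia.
Qed.

Definition off n (E : {set 'I_n}) m := find (fun t => Emod E (m.+1 + t)) (iota 0 n).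
Definition nextE n (E : {set 'I_n}) m := m.+1 + off E m.

Lemma Emod_mod n (E : {set 'I_n}) m : Emod E (m %% n) = Emod E m.
Proof. by rewrite /Emod modn_mod. Qed.

Lemma Emod_addn n (E : {set 'I_n}) m : Emod E (m + n) = Emod E m.
Proof. by rewrite /Emod modnDr. Qed.

Lemma has_off n (E : {set 'I_n}) m : (exists e, e \in E) ->
  has (fun t => Emod E (m.+1 + t)) (iota 0 n).
Proof.
case=> e eE; have n0 : 0 < n by apply: ord_pos e.
apply/hasP; exists ((e + (n - m.+1 %% n)) %% n).
  by rewrite mem_iota /= add0n ltn_pmod.
apply/existsP; exists e; rewrite eE /=; apply/eqP.
rewrite modnDmr {1}(divn_eq m.+1 n).
have rn := ltn_pmod m.+1 n0.
set q := m.+1 %/ n; set r := m.+1 %% n.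
have->: q * n + r + (e + (n - r)) = (q * n + e) + n by lia.
by rewrite modnDr modnMDl modn_small.
Qed.

Lemma off_lt n (E : {set 'I_n}) m : (exists e, e \in E) -> off E m < n.
Proof. by move=> ne; rewrite /off -[X in _ < X](size_iota 0 n) -has_find has_off. Qed.

Lemma Emod_nextE n (E : {set 'I_n}) m : (exists e, e \in E) -> Emod E (nextE E m).
Proof.
move=> ne; have := nth_find 0 (has_off m ne).
by rewrite nth_iota ?add0n //; apply: off_lt.
Qed.

Lemma nextE_min n (E : {set 'I_n}) m l : (exists e, e \in E) ->
  m < l -> l < nextE E m -> ~~ Emod E l.
Proof.
move=> ne ml lm.
have H : l - m.+1 < off E m by rewrite /nextE in lm; lia.
have := before_find 0 H.
have ol := off_lt m ne.
rewrite nth_iota ?add0n; last lia.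
by rewrite subnKC // => ->.
Qed.

Lemma nextE_spec n (E : {set 'I_n}) m l : (exists e, e \in E) ->
  m < l -> Emod E l -> (forall l', m < l' < l -> ~~ Emod E l') -> nextE E m = l.
Proof.
move=> ne ml El H.
case: (ltngtP (nextE E m) l) => // c.
  have h : m < nextE E m < l by rewrite c /nextE andbT; lia.
  by have := H _ h; rewrite Emod_nextE.
by rewrite (negbTE (nextE_min ne ml c)) in El.
Qed.

Lemma off_mod n (E : {set 'I_n}) m : off E m = off E (m %% n).
Proof.
apply: eq_find => t.
rewrite -Emod_mod -[RHS]Emod_mod; congr (Emod E _).
have e a : a.+1 + t = a + t.+1 by lia.
by rewrite !e [in RHS]modnDml.
Qed.

Lemma nextE_mod n (E : {set 'I_n}) m : nextE E m %% n = nextE E (m %% n) %% n.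
Proof.
rewrite /nextE -off_mod.
have e a : a.+1 + off E m = a + (off E m).+1 by lia.
by rewrite !e [in RHS]modnDml.
Qed.

Lemma iter_nextE_geq n (E : {set 'I_n}) j m : m <= iter j (nextE E) m.
Proof.
elim: j => //= j IH; apply: leq_trans IH _; rewrite /nextE; lia.
Qed.

Lemma iter_nextE_ge n (E : {set 'I_n}) j m : 0 < j -> nextE E m <= iter j (nextE E) m.
Proof.
case: j => // j _; rewrite iterSr; exact: iter_nextE_geq.
Qed.

Lemma notD1 n (y : cell n n) j d : isPos y j d -> 0 < d < n -> y \notin D1 n.
Proof.
move=> H /andP[d0 dn]; rewrite inE; apply/negP => /eqP e.
have := isPos_dg H dn; rewrite /dg e.
have->: y.2 + (n - y.2) = 0 + n by have := ltn_ord y.2; lia.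
rewrite modnDr mod0n; lia.
Qed.

Lemma modlt2 a k : a < 2 * k -> (a < k /\ a %% k = a) \/ (k <= a /\ a %% k = a - k).
Proof.
move=> H; case: (ltnP a k) => h; first by left; rewrite modn_small.
right; split => //.
have->: a = (a - k) + k by lia.
rewrite modnDr modn_small; lia.
Qed.

Lemma twomod k c : odd k -> 0 < c < k ->
  [/\ 0 < (2*c) %% k, (c = k-1 -> (2*c) %% k = k-2) &
   (c < k-1 -> ((2*c) %% k = k-1 /\ (2*c.+1) %% k = 1) \/
               (((2*c) %% k).+2 < k /\ (2*c.+1) %% k = ((2*c) %% k).+2))].
Proof.
move=> ok /andP[c0 ck].
have [h kh] : exists h, k = 2 * h + 1.
  exists k./2; move: (odd_double_half k); rewrite ok -mul2n /=; lia.
have H1 : 2 * c < 2 * k by lia.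
split.
- case: (modlt2 H1) => [[a ->]|[a ->]]; lia.
- move=> ce; case: (modlt2 H1) => [[a ->]|[a ->]]; lia.
- move=> cl; have H2 : 2 * c.+1 < 2 * k by lia.
  case: (modlt2 H1) => [[a1 ->]|[a1 ->]]; case: (modlt2 H2) => [[a2 ->]|[a2 ->]]; lia.
Qed.

Lemma walk n k (E : {set 'I_n}) : (exists e, e \in E) -> odd k -> 3 <= k -> k < n ->
  forall m g c i (x : cell n n),
  iter (k - c) (nextE E) g - i = m -> g < i -> i <= nextE E g -> 0 < c < k ->
  isPos x i ((2*c) %% k) ->
  isPos (iter m.+1 (CNf k E) x) (iter (k - c) (nextE E) g + (n - (k-1))) 0 /\
  (forall s, 0 < s < m.+1 -> iter s (CNf k E) x \notin D1 n).
Proof.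
move=> ne ok k3 kn m; elim/ltn_ind: m => m IH g c i x Hm gi ig hc Px.
set J := iter (k - c) (nextE E) g in Hm *.
have JgE : nextE E g <= J by apply: iter_nextE_ge; lia.
have [d0 dk1 dk2] := twomod ok hc.
have dlt : (2*c) %% k < k by apply: ltn_pmod; lia.
suff H : (m = 0 /\ isPos (CNf k E x) (J + (n-(k-1))) 0) \/
   exists g' c', [/\ iter (k - c') (nextE E) g' = J, g' < i.+1, i.+1 <= nextE E g',
         0 < c' < k & isPos (CNf k E x) i.+1 ((2*c') %% k)] /\ i < J.
  case: H => [[-> P]|[g' [c' [[e1 e2 e3 e4 e5] e6]]]].
    by split => // s /andP[s0 s1]; lia.
  have Hm' : iter (k - c') (nextE E) g' - i.+1 = m.-1 by rewrite e1; lia.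
  have mm : m.-1 < m by lia.
  have [P1 P2] := IH _ mm g' c' i.+1 _ Hm' e2 e3 e4 e5.
  rewrite e1 in P1.
  have mE : m = (m.-1).+1 by lia.
  rewrite mE iterSr; split => //.
  have [d0' _ _] := twomod ok e4.
  have dlt' : (2*c') %% k < n by apply: ltn_trans kn; apply: ltn_pmod; lia.
  case=> [|[|s]] // hs.
    by apply: (notD1 e5); rewrite d0'.
  rewrite iterSr; apply: P2; lia.
case: (boolP (Emod E i)) => iE.
  have ie : i = nextE E g.
    apply/eqP; rewrite eqn_leq ig /= leqNgt; apply/negP => H.
    by have := nextE_min ne gi H; rewrite iE.
  case: (ltngtP c (k-1)) => hc1.
  - right; exists i, c.+1; split; first split.
    + rewrite /J; have->: k - c = (k - c.+1).+1 by lia.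
      by rewrite iterSr -ie.
    + by [].
    + rewrite /nextE; lia.
    + lia.
    + case: (dk2 hc1) => [[e1 e2]|[e1 e2]]; rewrite e2.
        by apply: (CN_E3 (i := i)) => //; try lia; rewrite -e1.
      by apply: CN_E => //; lia.
    + rewrite /J; have->: k - c = (k - c.+1).+1 by lia.
      rewrite iterSr -ie.
      have := @iter_nextE_ge n E (k - c.+1) i; rewrite /nextE => h.
      have : i.+1 <= iter (k - c.+1) (nextE E) i by apply: leq_trans (h _); lia.
      by [].
  - lia.
  - left.
    have JE : J = i by rewrite /J hc1; have->: k - (k - 1) = 1 by lia.
    split; first by lia.
    rewrite JE; apply: CN_E2 => //; try lia.
    by rewrite -(dk1 hc1).
right; exists g, c.
have ne' : i <> nextE E g by move=> e; rewrite e Emod_nextE in iE.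
split; first split => //; try lia.
by apply: CN_notE => //; try lia; rewrite d0.
Qed.

Lemma Omega_val n k (E : {set 'I_n}) (d : 'I_n) : d \in E ->
  val (Omega k E d) = iter (k - 1) (nextE E) d %% n.
Proof.
move=> dE; have ne : exists e, e \in E by exists d.
have n0 : 0 < n by apply: ord_pos d.
set s := Eseq E; set vs := map val s.
have vsE : vs = sort leq (map val (enum E)) by rewrite /vs /Eseq sort_map.
have uvs : uniq vs.
  by rewrite vsE sort_uniq map_inj_uniq ?enum_uniq //; exact: val_inj.
have svs : sorted leq vs by rewrite vsE; apply: sort_sorted; exact: leq_total.
have mem1 : forall x, x \in vs -> x < n /\ Emod E x.
  move=> x; rewrite vsE mem_sort => /mapP[e]; rewrite mem_enum => eE ->.
  split; first exact: ltn_ord e. rewrite /Emod; apply/existsP; exists e; by rewrite eE /= modn_small ?eqxx ?ltn_ord.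
have mem2 : forall x, x < n -> Emod E x -> x \in vs.
  move=> x xn; rewrite /Emod => /existsP[e /andP[eE /eqP ev]].
  rewrite vsE mem_sort; apply/mapP; exists e; first by rewrite mem_enum.
  by rewrite ev modn_small.
set sz := size vs.
have mono : forall i j, i < sz -> j < sz -> i <= j -> nth 0 vs i <= nth 0 vs j.
  move=> i j ip jp ij; exact: (sorted_leq_nth leq_trans leqnn 0 svs).
have smono : forall i j, i < sz -> j < sz -> i < j -> nth 0 vs i < nth 0 vs j.
  move=> i j ip jp ij; rewrite ltn_neqAle mono //; last lia.
  by rewrite nth_uniq //; lia.
have nthn : forall i, i < sz -> nth 0 vs i < n.
  by move=> i ip; have [] := mem1 _ (mem_nth 0 ip).
have step : forall p, p < sz -> nextE E (nth 0 vs p) %% n = nth 0 vs ((p + 1) %% sz).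
  move=> p pz; have an := nthn _ pz.
  case: (ltnP p.+1 sz) => hp.
    rewrite (modn_small (_ : p + 1 < sz)); last lia.
    rewrite addn1 (@nextE_spec _ _ _ (nth 0 vs p.+1)) ?modn_small //.
    - exact: nthn.
    - exact: smono.
    - by have [] := mem1 _ (mem_nth 0 hp).
    move=> l /andP[al lb]; apply/negP => El.
    have ln : l < n by apply: ltn_trans lb (nthn _ hp).
    have lv := mem2 _ ln El.
    have qs : index l vs < sz by rewrite index_mem.
    have ql := nth_index 0 lv.
    case: (leqP (index l vs) p) => hq.
      by have := mono _ _ qs pz hq; rewrite ql; lia.
    by have := mono _ _ hp qs hq; rewrite ql; lia.
  have szp : sz = p.+1 by lia.
  have s0 : 0 < sz by lia.
  rewrite addn1 szp modnn.
  rewrite (@nextE_spec _ _ _ (nth 0 vs 0 + n)).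
  - by rewrite modnDr modn_small //; apply: nthn.
  - exact: ne.
  - lia.
  - by rewrite Emod_addn; have [] := mem1 _ (mem_nth 0 s0).
  move=> l /andP[al lb]; apply/negP => El.
  case: (ltnP l n) => ln.
    have lv := mem2 _ ln El.
    have qs : index l vs < sz by rewrite index_mem.
    have ql := nth_index 0 lv.
    by have := mono _ _ qs pz (_ : index l vs <= p); rewrite ql; lia.
  have El' : Emod E (l - n) by rewrite -Emod_addn subnK.
  have b0n := nthn _ s0.
  have ln' : l - n < n by lia.
  have lv := mem2 _ ln' El'.
  have qs : index (l - n) vs < sz by rewrite index_mem.
  have ql := nth_index 0 lv.
  by have := mono _ _ s0 qs (leq0n _); rewrite ql; lia.
have iterS : forall j p, p < sz ->
    iter j (nextE E) (nth 0 vs p) %% n = nth 0 vs ((p + j) %% sz).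
  elim=> [|j IH] p pz.
    by rewrite addn0 !modn_small //; apply: nthn.
  have s0 : 0 < sz by lia.
  rewrite iterS nextE_mod IH // step ?ltn_pmod //.
  by rewrite modnDml addn1 addnS.
have dv : val d \in vs by apply: map_f; rewrite mem_sort mem_enum.
have ip : index (val d) vs < sz by rewrite index_mem.
have szs : size s = sz by rewrite /sz size_map.
rewrite /Omega -/s.
have qlt : (index d s + (k - 1)) %% size s < size s by rewrite ltn_pmod // szs; lia.
rewrite -(nth_map d 0) // -/vs.
rewrite -(index_map val_inj) -/vs szs.
by rewrite -iterS // nth_index.
Qed.

Theorem proposition3p1 (n k : nat) (E : {set 'I_n}) :
  odd n -> odd k -> 3 <= k -> k < n ->
  forall d : 'I_n,
    first_hit (CN (kdiag n k) (RofE E) (fun _ : 'I_n => 1%R))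
              (fun x => x \in D1 n) (d, d) (S_D k E d, S_D k E d).
Proof.
move=> on ok k3 kn d.
have n0 : 0 < n by lia.
change (CN (kdiag n k) (RofE E) (fun _ : 'I_n => 1%R)) with (CNf k E).
have Pd : isPos (d, d) d 0 by split; rewrite /= ?addn0 modn_small.
have Pt : forall (y : 'I_n) J, val y = (J + (n - (k-1))) %% n ->
    isPos (y, y) (J + (n - (k-1))) 0.
  move=> y J e; have e2 : (y : nat) = (J + (n - (k-1))) %% n := e.
  by split; rewrite /= ?addn0 e2 ?modn_mod.
have Dt : forall y : 'I_n, (y, y) \in D1 n by move=> y; rewrite inE /=.
have km : (k - 1) %% n = k - 1 by rewrite modn_small //; lia.
rewrite /S_D; case: ifP => dE.
  have ne : exists e, e \in E by exists d.
  have Emd : Emod E d by rewrite /Emod; apply/existsP; exists d; rewrite dE /= modn_small ?eqxx.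
  have P1 : isPos (CNf k E (d, d)) d.+1 2 by apply: CN_E => //; lia.
  set J := iter (k - 1) (nextE E) d.
  have [W1 W2] := @walk n k E ne ok k3 kn (J - d.+1) d 1 d.+1 (CNf k E (d, d))
      erefl (ltnSn _) (leq_addr _ _) (ltac:(lia)) (ltac:(rewrite muln1 modn_small //; lia)).
  exists (J - d.+1).+2; split => //.
  - rewrite iterSr; apply: (isPos_uniq W1); apply: Pt.
    by rewrite /Theta /= Omega_val // km modnDml.
  - case=> [|[|s]] // hs.
      by apply/negP; apply: (notD1 P1); lia.
    by rewrite iterSr; apply/negP; apply: W2; lia.
have nE : ~~ Emod E d.
  apply/negP; rewrite /Emod => /existsP[e /andP[eE /eqP ev]].
  have : e = d by apply: val_inj; rewrite /= ev modn_small.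
  by move=> ee; rewrite ee dE in eE.
exists 1; split => //.
- change (iter 1 _ (d, d)) with (CNf k E (d, d)).
  have k0 : 0 < k by lia.
  apply: (isPos_uniq (@CN_notE0 n k E (d, d) d k0 kn nE Pd)); apply: Pt.
  by rewrite /Theta /= km.
- by move=> s; lia.
Qed.
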